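(* Let $M$ be a matroid flock on a finite set $E$, let $\alpha,\beta\in\mathbb{Z}^E$ and let $I\subseteq E$. If $I\cap\mathrm{supp}(\beta-\alpha)=\emptyset$ and $\alpha\le\beta$ (coordinatewise), then $r_\alpha(I)\ge r_\beta(I)$.
   Context: $\mathrm{supp}(x):=\{i:x_i\neq0\}$. $e_i$ unit vectors, $\mathbf{1}$ the all-one vector in $\mathbb{Z}^E$. A matroid flock of rank $d$ on $E$ is a map $M$ assigning to each $\alpha\in\mathbb{Z}^E$ a matroid $M_\alpha$ on $E$ of rank $d$ with (MF1) $M_\alpha/i=M_{\alpha+e_i}\setminus i$ for all $\alpha$, $i\in E$ (contraction, deletion); and (MF2) $M_\alpha=M_{\alpha+\mathbf{1}}$ for all $\alpha$. $r_\alpha$ denotes the rank function of $M_\alpha$. *)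

(* Defs.v *)
From mathcomp Require Import all_boot all_order all_algebra.
Set Implicit Arguments. Unset Strict Implicit. Unset Printing Implicit Defensive.
Import Order.TTheory GRing.Theory Num.Theory.
Local Open Scope ring_scope.

Definition is_matroid_rank (E : finType) (r : {set E} -> nat) : Prop :=
  [/\ (forall A : {set E}, (r A <= #|A|)%N),
      (forall A B : {set E}, A \subset B -> (r A <= r B)%N) &
      (forall A B : {set E}, (r (A :|: B) + r (A :&: B) <= r A + r B)%N)].

(* rank function of the contraction M / i, on subsets of E \ i *)
Definition contract_rank (E : finType) (r : {set E} -> nat) (i : E)
  (A : {set E}) : nat := (r (A :|: [set i]) - r [set i])%N.

(* rank function of the deletion M \ i, on subsets of E \ i *)
Definition delete_rank (E : finType) (r : {set E} -> nat) (i : E)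
  (A : {set E}) : nat := r A.

Definition unitv (E : finType) (i : E) : E -> int := fun j => (j == i)%:Z.
Definition addv (E : finType) (a b : E -> int) : E -> int := fun j => a j + b j.
Definition onev (E : finType) : E -> int := fun _ => 1.

Definition supp (E : finType) (x : E -> int) : {set E} := [set i | x i != 0].

Definition matroid_flock (E : finType) (d : nat)
  (M : (E -> int) -> {set E} -> nat) : Prop :=
  [/\ (forall alpha, is_matroid_rank (M alpha) /\ M alpha setT = d),
      (forall alpha (i : E) (A : {set E}), A \subset ~: [set i] ->
         contract_rank (M alpha) i A = delete_rank (M (addv alpha (unitv i))) i A) &
      (forall alpha (A : {set E}), M alpha A = M (addv alpha (@onev E)) A)].

(* Main.v *)
Require Import Defs.
From mathcomp Require Import all_boot all_order all_algebra.
From mathcomp Require Import zify.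
From Stdlib Require Import FunctionalExtensionality.
Import Order.TTheory GRing.Theory Num.Theory.
Local Open Scope ring_scope.

Lemma step_le {E : finType} {d : nat} {M : (E -> int) -> {set E} -> nat}
  (HM : matroid_flock d M) {alpha} {I : {set E}} {i} :
  i \notin I -> (M (Defs.addv alpha (unitv i)) I <= M alpha I)%N.
Proof.
move=> iI; case: HM => Hr H1 H2.
have sI : I \subset ~: [set i].
  apply/subsetP => x xI; rewrite !inE; apply/eqP => e; subst x; by rewrite xI in iI.
rewrite -[M _ I]/(delete_rank (M _) i I) -H1 // /contract_rank.
have [_ _ sub] := (Hr alpha).1.
have := sub I [set i].
have -> : I :&: [set i] = set0.
  apply/setP => x; rewrite !inE; apply/andP => -[xI /eqP e]; subst x; by rewrite xI in iI.
lia.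
Qed.

Theorem mainTheorem10 (E : finType) (d : nat) (M : (E -> int) -> {set E} -> nat)
  (HM : matroid_flock d M) (alpha beta : E -> int) (I : {set E}) :
  I :&: supp (fun j => beta j - alpha j) = set0 ->
  (forall j, alpha j <= beta j) ->
  (M beta I <= M alpha I)%N.
Proof.
move: {2}(\sum_j absz (beta j - alpha j))%N (leqnn (\sum_j absz (beta j - alpha j))%N) => n.
elim: n alpha => [|n IH] alpha Hn Hs Hab.
all: case: (boolP [exists j, alpha j < beta j]) => [/existsP [i Hi] | ]; last (rewrite negb_exists => /forallP Hne).
2,4: (have -> : beta = alpha; last by []);
     apply: functional_extensionality => j; apply/eqP; rewrite eq_le Hab /=;
     by rewrite leNgt Hne.
- exfalso; rewrite (bigD1 i) //= in Hn; move: Hn Hi; lia.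
- have iI : i \notin I.
    apply/negP => iI; have := congr1 (fun S : {set E} => i \in S) Hs; rewrite !inE iI /=.
    by rewrite subr_eq0 eq_sym (lt_eqF Hi).
  apply: (@leq_trans (M (Defs.addv alpha (unitv i)) I)); last exact: (@step_le _ _ _ HM alpha I i iI).
  apply: IH.
  + have E1 : ((\sum_j absz (beta j - Defs.addv alpha (unitv i) j)).+1 =
               \sum_j absz (beta j - alpha j))%N.
      rewrite (bigD1 i) //= [RHS](bigD1 i) //=.
      have -> : (\sum_(j | j != i) absz (beta j - Defs.addv alpha (unitv i) j) =
                 \sum_(j | j != i) absz (beta j - alpha j))%N.
        apply: eq_bigr => j ji; by rewrite /Defs.addv /unitv (negbTE ji) addr0.
      rewrite /Defs.addv /unitv eqxx. move: Hi; lia.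
    lia.
  + apply/setP => x; rewrite !inE; case xI: (x \in I) => //=.
    have := congr1 (fun S : {set E} => x \in S) Hs; rewrite !inE xI /= => /negbT; rewrite negbK.
    have xi : x != i by apply/eqP => e; subst x; rewrite xI in iI.
    by rewrite /Defs.addv /unitv (negbTE xi) addr0 => ->.
  + move=> j; rewrite /Defs.addv /unitv; case: eqP => [->|_]; last by rewrite addr0.
    move: Hi; lia.
Qed.
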